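(* Let $\widetilde\gamma$ be a $G$-invariant Kähler metric on $\widetilde M_2$, written (for some smooth $A:(0,\infty)\to\mathbb{R}$) as $\widetilde\gamma=A_1ds^2+A_2\sigma_1^2+A_3\sigma_2^2+A_4\sigma_3^2$ with $A_1=\frac{1}{8\sinh(s/2)}\frac{d}{ds}\big(\frac{A}{\cosh(s/2)}\big)$, $A_2=A$, $A_3=2\sinh(s/2)\frac{d}{ds}\big(\frac{A}{\cosh(s/2)}\big)$, $A_4=\frac{A}{\cosh^2(s/2)}$. Then its Ricci tensor is $$\mathrm{Ric}=C_1(s)\,ds^2+C_2(s)\,\sigma_1^2+C_3(s)\,\sigma_2^2+C_4(s)\,\sigma_3^2,$$ where $C_1,\dots,C_4$ are obtained from the function $$C(s)=-4\sinh(s/2)\cosh(s/2)\frac{d}{ds}\log\Big(\frac{A_1A_2}{\cosh^2(s/2)}\Big)-8\cosh^2(s/2)$$ by the same rule, i.e. $C_1=\frac{1}{8\sinh(s/2)}\frac{d}{ds}\big(\frac{C}{\cosh(s/2)}\big)$, $C_2=C$, $C_3=2\sinh(s/2)\frac{d}{ds}\big(\frac{C}{\cosh(s/2)}\big)$, $C_4=\frac{C}{\cosh^2(s/2)}$.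
   Context: $\mathbb{H}^2=\{x+iy:y>0\}$; $\widetilde M_2=\mathbb{H}^2\times\mathbb{H}^2\setminus\{(z,z)\}$ with the product complex structure. $PL(2,\mathbb{R})$ (real $2\times2$ matrices of positive determinant modulo scalars) acts diagonally by Möbius transformations $z\mapsto(az+b)/(cz+d)$; $P:(z_1,z_2)\mapsto(z_2,z_1)$; $G=PL(2,\mathbb{R})\times\{\mathrm{Id},P\}$. For $s>0$, $w_s=(ie^{s/2},ie^{-s/2})$, and $(s,g)\mapsto g\cdot w_s$ identifies $(0,\infty)\times PL(2,\mathbb{R})\cong\widetilde M_2$. $\sigma_1,\sigma_2,\sigma_3$ are the left-invariant 1-forms on $PL(2,\mathbb{R})$ dual to the left-invariant fields generated by $e_1=\begin{pmatrix}0&1\\1&0\end{pmatrix}$, $e_2=\begin{pmatrix}0&1\\-1&0\end{pmatrix}$, $e_3=\begin{pmatrix}1&0\\0&-1\end{pmatrix}$, pulled back to $\widetilde M_2$. Juxtaposition of 1-forms denotes symmetric product. *)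

(* Defs.v *)
From Stdlib Require Import Reals ClassicalEpsilon.
Open Scope R_scope.

(* [Dv f x] is the derivative of [f] at [x] whenever [f] is differentiable at
   [x] (the limit is unique); an unspecified real otherwise. *)
Definition Dv (f : R -> R) (x : R) : R :=
  epsilon (inhabits 0) (fun l => derivable_pt_lim f x l).

Definition smooth_pos (A : R -> R) : Prop :=
  exists f : nat -> R -> R,
    (forall x, f O x = A x) /\
    (forall n s, 0 < s -> derivable_pt_lim (f n) s (f (S n) s)).

(* Index I0 <-> d/ds (dual ds); Ik <-> left-invariant field generated by e_k
   (dual sigma_k), k = 1,2,3. *)
Inductive idx := I0 | I1 | I2 | I3.

Definition idx_eqb (a b : idx) : bool :=
  match a, b with
  | I0, I0 | I1, I1 | I2, I2 | I3, I3 => true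
  | _, _ => false
  end.

Definition sum4 (f : idx -> R) : R := f I0 + f I1 + f I2 + f I3.

(* 2x2 real matrices (a,b,c,d) = [[a,b],[c,d]] *)
Definition mat := (R * R * R * R)%type.
Definition mmul (m n : mat) : mat :=
  let '(a, b, c, d) := m in let '(a', b', c', d') := n in
  (a*a' + b*c', a*b' + b*d', c*a' + d*c', c*b' + d*d').
Definition msub (m n : mat) : mat :=
  let '(a, b, c, d) := m in let '(a', b', c', d') := n in
  (a - a', b - b', c - c', d - d').
Definition mbracket (m n : mat) : mat := msub (mmul m n) (mmul n m).

Definition e1 : mat := (0, 1, 1, 0).
Definition e2 : mat := (0, 1, -1, 0).
Definition e3 : mat := (1, 0, 0, -1).

(* coordinates of a traceless matrix [[a,b],[c,-a]] in the basis e1,e2,e3: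
   ((b+c)/2) e1 + ((b-c)/2) e2 + a e3 *)
Definition coord (k : idx) (m : mat) : R :=
  let '(a, b, c, _) := m in
  match k with
  | I0 => 0
  | I1 => (b + c) / 2
  | I2 => (b - c) / 2
  | I3 => a
  end.

Definition emat (a : idx) : option mat :=
  match a with I0 => None | I1 => Some e1 | I2 => Some e2 | I3 => Some e3 end.

(* structure functions of the frame: [E_a, E_b] = sum_m cst m a b E_m.
   d/ds commutes with the left-invariant fields; left-invariant fields
   bracket as the Lie algebra elements. *)
Definition cst (m a b : idx) : R :=
  match emat a, emat b with
  | Some x, Some y => coord m (mbracket x y)
  | _, _ => 0
  end.

(** * Levi-Civita connection and Ricci tensor of a G-invariant diagonal metric
    g = g I0 ds^2 + g I1 sigma1^2 + g I2 sigma2^2 + g I3 sigma3^2,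
    whose coefficients depend on s only. *)
Definition Ef (a : idx) (f : R -> R) (s : R) : R :=
  match a with I0 => Dv f s | _ => 0 end.

Definition gm (g : idx -> R -> R) (i j : idx) (s : R) : R :=
  if idx_eqb i j then g i s else 0.

Definition cl (g : idx -> R -> R) (a b k : idx) (s : R) : R :=
  sum4 (fun m => cst m a b * gm g m k s).

(* Koszul formula: Gl a b c = g(nabla_{E_a} E_b, E_c) *)
Definition Gl (g : idx -> R -> R) (a b c : idx) (s : R) : R :=
  / 2 * (Ef a (gm g b c) s + Ef b (gm g a c) s - Ef c (gm g a b) s
         + cl g a b c s - cl g a c b s - cl g b c a s).

(* Gu a b e = Gamma^e_{ab}, nabla_{E_a} E_b = sum_e Gu a b e E_e *)
Definition Gu (g : idx -> R -> R) (a b e : idx) (s : R) : R :=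
  Gl g a b e s / g e s.

(* e-th component of R(E_a,E_b)E_c
   = nabla_a nabla_b E_c - nabla_b nabla_a E_c - nabla_{[E_a,E_b]} E_c *)
Definition Riem (g : idx -> R -> R) (a b c e : idx) (s : R) : R :=
  Ef a (Gu g b c e) s - Ef b (Gu g a c e) s
  + sum4 (fun d => Gu g b c d s * Gu g a d e s - Gu g a c d s * Gu g b d e s)
  - sum4 (fun m => cst m a b * Gu g m c e s).

(* Ric(E_b, E_c) = trace (X |-> R(X,E_b)E_c) *)
Definition Ric (g : idx -> R -> R) (b c : idx) (s : R) : R :=
  sum4 (fun a => Riem g a b c a s).

Definition coeffs (A : R -> R) (i : idx) (s : R) : R :=
  match i with
  | I0 => / (8 * sinh (s / 2)) * Dv (fun t => A t / cosh (t / 2)) s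
  | I1 => A s
  | I2 => 2 * sinh (s / 2) * Dv (fun t => A t / cosh (t / 2)) s
  | I3 => A s / (cosh (s / 2)) ^ 2
  end.

Definition Cfun (A : R -> R) (s : R) : R :=
  - 4 * sinh (s / 2) * cosh (s / 2)
      * Dv (fun t => ln (coeffs A I0 t * coeffs A I1 t / (cosh (t / 2)) ^ 2)) s
  - 8 * (cosh (s / 2)) ^ 2.

(* Main.v *)
Require Import Defs.
From Stdlib Require Import Reals Lra Lia ClassicalEpsilon.
From Coquelicot Require Import Coquelicot.
Open Scope R_scope.

Lemma locally_pos (x : R) : 0 < x -> locally x (fun t => 0 < t).
Proof.
  intro Hx. exists (mkposreal x Hx). intros y Hy.
  change (Rabs (y - x) < x) in Hy. apply Rabs_def2 in Hy. simpl. lra.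
Qed.

Lemma Dv_loc (f h : R -> R) (x l : R) :
  0 < x -> (forall t, 0 < t -> f t = h t) -> is_derive h x l -> Dv f x = l.
Proof.
  intros Hx Hfh Hd.
  assert (Hf : is_derive f x l).
  { apply (is_derive_ext_loc h f); [|exact Hd].
    generalize (locally_pos x Hx). apply filter_imp. intros t Ht. symmetry; auto. }
  apply is_derive_Reals in Hf.
  unfold Dv. apply (uniqueness_limite f x).
  - apply epsilon_spec. now exists l.
  - exact Hf.
Qed.

Definition sh (t : R) := sinh (t / 2).
Definition ch (t : R) := cosh (t / 2).
Lemma dsh t : is_derive sh t (ch t / 2).
Proof. unfold sh, ch, sinh, cosh. auto_derive; [auto|]. unfold Rdiv; ring. Qed.
Lemma dch t : is_derive ch t (sh t / 2).
Proof. unfold sh, ch, sinh, cosh. auto_derive; [auto|]. unfold Rdiv; ring. Qed.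
Lemma ch_pos t : 0 < ch t.
Proof. unfold ch, cosh. pose proof (exp_pos (t/2)); pose proof (exp_pos (-(t/2))). lra. Qed.
Lemma sh_pos t : 0 < t -> 0 < sh t.
Proof. intro. unfold sh, sinh. assert (exp (-(t/2)) < exp (t/2)) by (apply exp_increasing; lra). lra. Qed.
Definition Q0 (i : idx) (t : R) : R := match i with
 | I0 => / (8 * sh t) | I1 => ch t | I2 => 2 * sh t | I3 => / ch t end.
Definition Q1 (i : idx) (t : R) : R := match i with
 | I0 => - ch t / (16 * sh t ^ 2) | I1 => sh t / 2 | I2 => ch t | I3 => - sh t / (2 * ch t ^ 2) end.
Definition Q2 (i : idx) (t : R) : R := match i with
 | I0 => - / (32 * sh t) + ch t ^ 2 / (16 * sh t ^ 3) | I1 => ch t / 4 | I2 => sh t / 2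
 | I3 => - / (4 * ch t) + sh t ^ 2 / (2 * ch t ^ 3) end.
Lemma Dsh t : Derive (fun x => sh x) t = ch t / 2.
Proof. apply is_derive_unique, dsh. Qed.
Lemma Dch t : Derive (fun x => ch x) t = sh t / 2.
Proof. apply is_derive_unique, dch. Qed.
Lemma exsh t : ex_derive (fun x => sh x) t.
Proof. eexists; apply dsh. Qed.
Lemma exch t : ex_derive (fun x => ch x) t.
Proof. eexists; apply dch. Qed.
Ltac exd := match goal with
  | |- ex_derive (fun x => sh x) _ => apply exsh
  | |- ex_derive (fun x => ch x) _ => apply exch end.
Ltac rwD := rewrite ?Dsh, ?Dch.
Ltac nz := repeat match goal with
  | |- _ /\ _ => split
  | |- _ * _ <> 0 => apply Rmult_integral_contrapositive_currified
  | |- _ ^ _ <> 0 => apply pow_nonzero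
  | |- / _ <> 0 => apply Rinv_neq_0_compat
  end; try exact I; try (match goal with |- _ <> 0 => lra end).
Lemma dQ0 i t : 0 < t -> is_derive (Q0 i) t (Q1 i t).
Proof.
  intro Ht. pose proof (sh_pos t Ht). pose proof (ch_pos t).
  destruct i; cbv beta iota delta [Q0 Q1]; auto_derive; repeat match goal with |- _ /\ _ => split end; try exd; try exact I; try (nz; fail); rwD; field; nz.
Qed.

Lemma dQ1 i t : 0 < t -> is_derive (Q1 i) t (Q2 i t).
Proof.
  intro Ht. pose proof (sh_pos t Ht). pose proof (ch_pos t).
  destruct i; cbv beta iota delta [Q1 Q2]; auto_derive; repeat match goal with |- _ /\ _ => split end; try exd; try exact I; try (nz; fail); rwD; field; nz.
Qed.

Definition Pk (i : idx) : nat := match i with I0 | I2 => 1%nat | _ => 0%nat end.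
Definition G0 (F : nat -> R -> R) i t := F (Pk i) t * Q0 i t.
Definition G1 (F : nat -> R -> R) i t := F (S (Pk i)) t * Q0 i t + F (Pk i) t * Q1 i t.
Definition G2 (F : nat -> R -> R) i t :=
  F (S (S (Pk i))) t * Q0 i t + 2 * F (S (Pk i)) t * Q1 i t + F (Pk i) t * Q2 i t.

Section Core.
Variable F : nat -> R -> R.
Hypothesis dF : forall k t, (k <= 2)%nat -> 0 < t -> is_derive (F k) t (F (S k) t).

Lemma DF k t : (k <= 2)%nat -> 0 < t -> Derive (fun x => F k x) t = F (S k) t.
Proof. intros. apply is_derive_unique, dF; auto. Qed.
Lemma DQ0 i t : 0 < t -> Derive (fun x => Q0 i x) t = Q1 i t.
Proof. intros. apply is_derive_unique, dQ0; auto. Qed.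
Lemma DQ1 i t : 0 < t -> Derive (fun x => Q1 i x) t = Q2 i t.
Proof. intros. apply is_derive_unique, dQ1; auto. Qed.

Lemma Pk_le i : (Pk i <= 1)%nat.
Proof. destruct i; simpl; auto. Qed.

Ltac exF := match goal with
  | |- ex_derive (fun x => F ?k x) ?t => exists (F (S k) t); apply dF; [lia|assumption]
  | |- ex_derive (fun x => Q0 ?i x) ?t => exists (Q1 i t); apply dQ0; assumption
  | |- ex_derive (fun x => Q1 ?i x) ?t => exists (Q2 i t); apply dQ1; assumption
  end.
Lemma dG0 i t : 0 < t -> is_derive (G0 F i) t (G1 F i t).
Proof.
  intro Ht. pose proof (Pk_le i). unfold G0, G1. auto_derive.
  - repeat split; exF.
  - rewrite DF, DQ0 by (try lia; assumption). ring.
Qed.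
Lemma dG1 i t : 0 < t -> is_derive (G1 F i) t (G2 F i t).
Proof.
  intro Ht. pose proof (Pk_le i). unfold G1, G2. auto_derive.
  - repeat split; exF.
  - rewrite !DF, DQ0, DQ1 by (try lia; assumption). ring.
Qed.
End Core.
Definition alpha (a b c i : idx) : R :=
  / 2 * ((if idx_eqb i c then cst c a b else 0) - (if idx_eqb i b then cst b a c else 0)
         - (if idx_eqb i a then cst a b c else 0)).
Definition beta (a b c i : idx) : R :=
  / 2 * ((if andb (andb (idx_eqb a I0) (idx_eqb b c)) (idx_eqb i b) then 1 else 0)
       + (if andb (andb (idx_eqb b I0) (idx_eqb a c)) (idx_eqb i a) then 1 else 0)
       - (if andb (andb (idx_eqb c I0) (idx_eqb a b)) (idx_eqb i a) then 1 else 0)).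

Lemma Dv_of f x l : is_derive f x l -> Dv f x = l.
Proof.
  intro H. apply is_derive_Reals in H. unfold Dv. apply (uniqueness_limite f x).
  - apply epsilon_spec. now exists l.
  - exact H.
Qed.

Lemma Dv_gm g i j t : Dv (gm g i j) t = if idx_eqb i j then Dv (g i) t else 0.
Proof.
  destruct i, j; simpl; try reflexivity;
  apply Dv_of; unfold gm; simpl; auto_derive; auto.
Qed.

Lemma Gl_lin g a b c t :
  Gl g a b c t = sum4 (fun i => alpha a b c i * g i t + beta a b c i * Dv (g i) t).
Proof.
  destruct a, b, c; unfold Gl, cl, sum4, alpha, beta; cbn [Ef];
  rewrite ?Dv_gm; unfold gm; cbn [idx_eqb andb]; ring.
Qed.

Lemma Ef_eq a f s : Ef a f s = if idx_eqb a I0 then Dv f s else 0.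
Proof. destruct a; reflexivity. Qed.

Section Main.
Variable A : R -> R.
Variable F : nat -> R -> R.
Hypothesis dF : forall k t, (k <= 2)%nat -> 0 < t -> is_derive (F k) t (F (S k) t).
Hypothesis hA : forall t, A t / cosh (t / 2) = F 0%nat t.
Hypothesis hpos : forall t, 0 < t -> 0 < F 0%nat t /\ 0 < F 1%nat t.

Lemma coeffs_val i t : 0 < t -> coeffs A i t = G0 F i t.
Proof.
  intro Ht.
  assert (D1 : Dv (fun t => A t / cosh (t / 2)) t = F 1%nat t).
  { apply (Dv_loc _ (F 0%nat)); auto; apply dF; auto. }
  pose proof (ch_pos t) as Hc. unfold ch in Hc.
  destruct i; unfold coeffs, G0, Q0; simpl Pk.
  - rewrite D1. unfold sh. ring.
  - rewrite <- hA. unfold ch. field. lra.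
  - rewrite D1. unfold sh. ring.
  - rewrite <- hA. unfold ch. field. lra.
Qed.

Lemma dcoeffs i t : 0 < t -> Dv (coeffs A i) t = G1 F i t.
Proof.
  intro Ht. apply (Dv_loc _ (G0 F i)); auto.
  - intros; apply coeffs_val; auto.
  - apply dG0; auto.
Qed.

Lemma G0_pos i t : 0 < t -> 0 < G0 F i t.
Proof.
  intro Ht. destruct (hpos t Ht). pose proof (sh_pos t Ht). pose proof (ch_pos t).
  destruct i; unfold G0, Q0; simpl Pk.
  - apply Rmult_lt_0_compat; auto. apply Rinv_0_lt_compat. lra.
  - apply Rmult_lt_0_compat; auto.
  - apply Rmult_lt_0_compat; auto. lra.
  - apply Rmult_lt_0_compat; auto. apply Rinv_0_lt_compat. lra.
Qed.

Definition GLa a b c t := sum4 (fun i => alpha a b c i * G0 F i t + beta a b c i * G1 F i t).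
Definition GLb a b c t := sum4 (fun i => alpha a b c i * G1 F i t + beta a b c i * G2 F i t).

Lemma Gu_val a b e t : 0 < t -> Gu (coeffs A) a b e t = GLa a b e t / G0 F e t.
Proof.
  intro Ht. unfold Gu. rewrite Gl_lin. unfold sum4, GLa.
  rewrite !dcoeffs, !coeffs_val by auto; reflexivity.
Qed.

Lemma DG0 i t : 0 < t -> Derive (fun x => G0 F i x) t = G1 F i t.
Proof. intros. apply is_derive_unique, dG0; auto. Qed.
Lemma DG1 i t : 0 < t -> Derive (fun x => G1 F i x) t = G2 F i t.
Proof. intros. apply is_derive_unique, dG1; auto. Qed.

Ltac exG := match goal with
  | |- ex_derive (fun x => G0 F ?i x) ?t => exists (G1 F i t); apply dG0; assumption
  | |- ex_derive (fun x => G1 F ?i x) ?t => exists (G2 F i t); apply dG1; assumption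
  | |- ex_derive (fun x => sh x) _ => apply exsh
  | |- ex_derive (fun x => ch x) _ => apply exch
  end.

Lemma dGLa a b c t : 0 < t -> is_derive (GLa a b c) t (GLb a b c t).
Proof.
  intro Ht. unfold GLa, GLb, sum4. auto_derive.
  - repeat split; exG.
  - rewrite !DG0, !DG1 by auto. ring.
Qed.

Lemma dGu a b e s : 0 < s -> Dv (Gu (coeffs A) a b e) s =
  (GLb a b e s * G0 F e s - GLa a b e s * G1 F e s) / (G0 F e s) ^ 2.
Proof.
  intro Hs. pose proof (G0_pos e s Hs).
  apply (Dv_loc _ (fun t => GLa a b e t / G0 F e t)); auto.
  - intros; apply Gu_val; auto.
  - auto_derive.
    + repeat split; try exG; try (exists (GLb a b e s); apply dGLa; auto); lra.
    + rewrite DG0 by auto. assert (HD : Derive (fun x => GLa a b e x) s = GLb a b e s) by (apply is_derive_unique, dGLa; auto). rewrite HD. field. lra.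
Qed.

Definition Lf t := G1 F I0 t / G0 F I0 t + G1 F I1 t / G0 F I1 t - sh t / ch t.
Definition CE t := -4 * sh t * ch t * Lf t - 8 * ch t ^ 2.
Definition CEd t := -2 * ch t * Lf t - 4 * sh t *
  ((G2 F I0 t * G0 F I0 t - G1 F I0 t ^ 2) / G0 F I0 t ^ 2
   + (G2 F I1 t * G0 F I1 t - G1 F I1 t ^ 2) / G0 F I1 t ^ 2
   - (ch t ^ 2 - sh t ^ 2) / (2 * ch t ^ 2)) - 4 * sh t.

Lemma Cfun_val t : 0 < t -> Cfun A t = CE t.
Proof.
  intro Ht. pose proof (G0_pos I0 t Ht). pose proof (G0_pos I1 t Ht). pose proof (ch_pos t).
  unfold Cfun.
  rewrite (Dv_loc _ (fun t => ln (G0 F I0 t * G0 F I1 t / ch t ^ 2)) t (Lf t)); auto.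
  - intros u Hu. rewrite !coeffs_val by auto. reflexivity.
  - unfold Lf. auto_derive.
    + repeat split; try exG; try (nz; fail).
      apply Rdiv_lt_0_compat; [apply Rmult_lt_0_compat; assumption | rewrite Rmult_1_r; apply Rmult_lt_0_compat; lra].
    + rewrite !DG0 by auto. rewrite Dch. field. repeat split; lra.
Qed.

Lemma dCfun s : 0 < s -> Dv (fun t => Cfun A t / cosh (t / 2)) s = CEd s.
Proof.
  intro Hs. pose proof (G0_pos I0 s Hs). pose proof (G0_pos I1 s Hs). pose proof (ch_pos s).
  pose proof (sh_pos s Hs).
  apply (Dv_loc _ (fun t => CE t / ch t)); auto.
  - intros u Hu. rewrite Cfun_val by auto. reflexivity.
  - unfold CE, CEd, Lf. auto_derive.
    + repeat split; try exG; try (nz; fail).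
    + rewrite !DG0, !DG1 by auto. rewrite Dch, Dsh. field. repeat split; lra.
Qed.


Lemma Ric_all b c s : 0 < s ->
  Ric (coeffs A) b c s = if idx_eqb b c then coeffs (Cfun A) b s else 0.
Proof.
  intro Hs. pose proof (hpos s Hs) as [HF0 HF1].
  assert (HE : 1 < exp (s/2)) by (rewrite <- exp_0; apply exp_increasing; lra).
  unfold Ric, Riem, sum4. rewrite !Ef_eq. rewrite !dGu, !Gu_val by assumption.
  destruct b, c; cbn [idx_eqb]; unfold coeffs; rewrite ?dCfun, ?Cfun_val by assumption;
  unfold GLa, GLb, alpha, beta, sum4, CE, CEd, Lf, G0, G1, G2, Pk, Q0, Q1, Q2;
  cbn [idx_eqb andb];
  unfold cst; cbn [emat coord mbracket mmul msub e1 e2 e3];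
  unfold sh, ch, sinh, cosh in *; rewrite exp_Ropp in *;
  generalize (F 0 s) (F 1 s) (F 2 s) (F 3 s) (exp (s/2)) HF0 HF1 HE; clear;
  intros f0 f1 f2 f3 x H0 H1 HE;
  field; repeat split; nra.
Qed.
End Main.

Definition U3 (t : R) := 5 * sh t / (8 * ch t ^ 2) - 3 * sh t ^ 3 / (4 * ch t ^ 4).

Lemma dQ2 t : is_derive (Q2 I3) t (U3 t).
Proof.
  pose proof (ch_pos t).
  cbv beta iota delta [Q2 U3]; auto_derive; repeat match goal with |- _ /\ _ => split end; try exd; try exact I; try (nz; fail); rwD; field; nz.
Qed.

Section Leib.
Variables p q : nat -> R -> R.
Variable t : R.
Hypothesis hp : forall n, (n <= 2)%nat -> is_derive (p n) t (p (S n) t).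
Hypothesis hq : forall n, (n <= 2)%nat -> is_derive (q n) t (q (S n) t).
Definition LF (k : nat) (x : R) : R :=
  match k with
  | O => p 0 x * q 0 x
  | 1 => p 1 x * q 0 x + p 0 x * q 1 x
  | 2 => p 2 x * q 0 x + 2 * p 1 x * q 1 x + p 0 x * q 2 x
  | _ => p 3 x * q 0 x + 3 * p 2 x * q 1 x + 3 * p 1 x * q 2 x + p 0 x * q 3 x
  end.
Lemma dLF k : (k <= 2)%nat -> is_derive (LF k) t (LF (S k) t).
Proof.
  intros Hk.
  assert (Dp : forall n, (n <= 2)%nat -> Derive (fun x => p n x) t = p (S n) t)
    by (intros; apply is_derive_unique, hp; auto).
  assert (Dq : forall n, (n <= 2)%nat -> Derive (fun x => q n x) t = q (S n) t)
    by (intros; apply is_derive_unique, hq; auto).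
  destruct k as [|[|[|k]]]; try lia; unfold LF; auto_derive;
  try (repeat split; match goal with
    | |- ex_derive (fun x => p ?n x) _ => exists (p (S n) t); apply hp; lia
    | |- ex_derive (fun x => q ?n x) _ => exists (q (S n) t); apply hq; lia end);
  rewrite ?Dp, ?Dq by lia; ring.
Qed.
End Leib.

Section Final.
Variable A : R -> R.
Variable f : nat -> R -> R.
Hypothesis hf0 : forall x, f O x = A x.
Hypothesis hf : forall n s, 0 < s -> derivable_pt_lim (f n) s (f (S n) s).
Definition qq (n : nat) : R -> R :=
  match n with O => Q0 I3 | 1 => Q1 I3 | 2 => Q2 I3 | _ => U3 end.
Definition Fs := LF f qq.

Lemma dFs k t : (k <= 2)%nat -> 0 < t -> is_derive (Fs k) t (Fs (S k) t).
Proof.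
  intros Hk Ht. apply dLF; auto.
  - intros n _. apply is_derive_Reals, hf; auto.
  - intros n Hn. destruct n as [|[|[|n]]]; try lia; simpl.
    + apply dQ0; auto.
    + apply dQ1; auto.
    + apply dQ2.
Qed.

Lemma hAs t : A t / cosh (t / 2) = Fs 0 t.
Proof. pose proof (ch_pos t). unfold Fs, LF, qq, Q0, ch in *. rewrite hf0. field. lra. Qed.

End Final.

Theorem proposition3p3 :
  forall A : R -> R,
    smooth_pos A ->
    (forall s, 0 < s -> forall i, 0 < coeffs A i s) ->
    forall s, 0 < s -> forall b c : idx,
      Ric (coeffs A) b c s =
        (if idx_eqb b c then coeffs (Cfun A) b s else 0).
Proof.
  intros A [f [hf0 hf]] Hpos s Hs b c.
  apply (Ric_all A (Fs f)); auto.
  - intros; apply dFs; auto.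
  - intros; apply hAs; auto.
  - intros t Ht. split.
    + pose proof (Hpos t Ht I1) as H. simpl in H. rewrite <- (hAs A f hf0 t).
      apply Rdiv_lt_0_compat; auto. apply (ch_pos t).
    + pose proof (Hpos t Ht I0) as H. simpl in H.
      assert (D1 : Dv (fun t => A t / cosh (t / 2)) t = Fs f 1%nat t).
      { apply (Dv_loc _ (Fs f 0%nat)); auto; [intros; apply hAs; auto | apply dFs; auto]. }
      rewrite D1 in H. pose proof (sh_pos t Ht). unfold sh in *.
      assert (0 < 8 * sinh (t/2)) by lra.
      replace (Fs f 1 t) with ((8 * sinh (t/2)) * (/ (8 * sinh (t / 2)) * Fs f 1 t)) by (field; lra).
      apply Rmult_lt_0_compat; auto.
Qed.
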